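(* Let $\mathcal D$ be universal, $\mathrm M=(M,d)\in\mathfrak U_{\mathcal D}$, $A\subseteq M$ finite, $s\in\mathbb N$, and for each $i\in\{0,\dots,s-1\}$ let $\mathfrak t_i$ be a Katětov function of $\mathrm M$ with domain $A$ (not necessarily distinct). Let $d''$ be a metric on the index set $\{0,\dots,s-1\}$ with $d''(i,j)\in d(\mathfrak t_i,\mathfrak t_j)$ for all $i,j$. Define $d'$ on the disjoint union $A\sqcup\{0,\dots,s-1\}$ by $d'(x,y)=d(x,y)$ for $x,y\in A$, $d'(i,j)=d''(i,j)$, and $d'(x,i)=d'(i,x)=\mathfrak t_i(x)$ for $x\in A$. Then $d'$ is a metric, and for every $C\subseteq\{0,\dots,s-1\}$, every isometric embedding $\beta$ of $(A\cup C,d')$ into $\mathrm M$ with $\beta(x)=x$ for all $x\in A$ extends to an isometric embedding $\alpha$ of $(A\cup\{0,\dots,s-1\},d')$ into $\mathrm M$ with $\alpha(i)\in\operatorname{orb}(\mathfrak t_i)$ for all $i$.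
   Context: $\mathcal D$ is a finite subset of $\mathbb R_{\ge0}$ containing $0$. $\mathfrak U_{\mathcal D}$ is the class of countable homogeneous metric spaces (every isometry between finite subspaces extends to an isometry of the space onto itself) with distance set exactly $\mathcal D$ into which every finite metric space with distances in $\mathcal D$ embeds isometrically; $\mathcal D$ is universal if this class is nonempty. A Katětov function of $\mathrm M$ is a map $\mathfrak t:F\to\mathcal D\setminus\{0\}$, $F\subseteq M$ finite, with $|\mathfrak t(x)-\mathfrak t(y)|\le d(x,y)\le\mathfrak t(x)+\mathfrak t(y)$ for all $x,y\in F$; $\operatorname{orb}(\mathfrak t)=\{y\in M\setminus F: d(y,x)=\mathfrak t(x)\ \forall x\in F\}$. $d(\mathfrak s,\mathfrak t)=\{d(x,y):x\in\operatorname{orb}(\mathfrak s),y\in\operatorname{orb}(\mathfrak t)\}$. *)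

(* Defs.v *)
From Stdlib Require Export Reals List.
Export ListNotations.
Open Scope R_scope.

Definition is_metric {X : Type} (P : X -> Prop) (e : X -> X -> R) : Prop :=
  (forall x y, P x -> P y -> (e x y = 0 <-> x = y)) /\
  (forall x y, P x -> P y -> e x y = e y x) /\
  (forall x y z, P x -> P y -> P z -> e x z <= e x y + e y z).

Definition countable_type (M : Type) : Prop :=
  exists f : M -> nat, forall x y, f x = f y -> x = y.

(* every isometry between finite subspaces (domain given by the finite list l,
   the map by g restricted to l) extends to an isometry of M onto itself *)
Definition homogeneous {M : Type} (d : M -> M -> R) : Prop :=
  forall (l : list M) (g : M -> M),
    (forall x y, In x l -> In y l -> d (g x) (g y) = d x y) ->
    exists h : M -> M,
      (forall x y, d (h x) (h y) = d x y) /\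
      (forall y, exists x, h x = y) /\
      (forall x, In x l -> h x = g x).

Definition distance_set_is {M : Type} (d : M -> M -> R) (D : list R) : Prop :=
  forall r, In r D <-> exists x y, d x y = r.

Definition embeds_all_finite {M : Type} (d : M -> M -> R) (D : list R) : Prop :=
  forall (n : nat) (e : nat -> nat -> R),
    is_metric (fun i => (i < n)%nat) e ->
    (forall i j, (i < n)%nat -> (j < n)%nat -> In (e i j) D) ->
    exists f : nat -> M,
      forall i j, (i < n)%nat -> (j < n)%nat -> d (f i) (f j) = e i j.

Definition in_UD (D : list R) (M : Type) (d : M -> M -> R) : Prop :=
  is_metric (fun _ => True) d /\ countable_type M /\ homogeneous d /\
  distance_set_is d D /\ embeds_all_finite d D.

Definition universal (D : list R) : Prop :=
  exists (M : Type) (d : M -> M -> R), in_UD D M d.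

(* t is a Katetov function of M with domain A (values outside A irrelevant) *)
Definition katetov (D : list R) {M : Type} (d : M -> M -> R) (A : list M)
  (t : M -> R) : Prop :=
  (forall x, In x A -> In (t x) D /\ t x <> 0) /\
  (forall x y, In x A -> In y A -> Rabs (t x - t y) <= d x y /\ d x y <= t x + t y).

Definition orb {M : Type} (d : M -> M -> R) (A : list M) (t : M -> R) (y : M) : Prop :=
  ~ In y A /\ forall x, In x A -> d y x = t x.

Definition in_dist_set {M : Type} (d : M -> M -> R) (A : list M)
  (s t : M -> R) (r : R) : Prop :=
  exists x y, orb d A s x /\ orb d A t y /\ d x y = r.

(* the metric d' on A ⊔ {0..s-1}, represented in M + nat *)
Definition dprime {M : Type} (d : M -> M -> R) (d'' : nat -> nat -> R)
  (t : nat -> M -> R) (p q : M + nat) : R :=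
  match p, q with
  | inl x, inl y => d x y
  | inr i, inr j => d'' i j
  | inl x, inr i => t i x
  | inr i, inl x => t i x
  end.

Definition in_dom {M : Type} (A : list M) (C : nat -> Prop) (p : M + nat) : Prop :=
  match p with
  | inl x => In x A
  | inr i => C i
  end.

(* Main.v *)
Require Import Defs.
From Stdlib Require Import Lra Lia Classical ClassicalEpsilon.

Lemma nodup_exists {X : Type} (l : list X) :
  exists l', NoDup l' /\ forall x, In x l <-> In x l'.
Proof.
  induction l as [|a l IH].
  - exists nil; split; [constructor| simpl; tauto].
  - destruct IH as [l' [Hn Hi]]. destruct (classic (In a l')) as [Ha|Ha].
    + exists l'. split; auto. intro x; simpl; split.
      * intros [<-|H]; auto; apply Hi; auto.
      * intro H; right; apply Hi; auto.
    + exists (a::l'). split. constructor; auto. intro x; simpl; rewrite Hi; tauto.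
Qed.

Lemma list_of_pred_aux (C : nat -> Prop) s :
  exists l, forall i, In i l <-> (C i /\ (i < s)%nat).
Proof.
  induction s as [|s IH].
  - exists nil. intro i; simpl; split; [tauto| intros [_ H]; lia].
  - destruct IH as [l Hl]. destruct (classic (C s)) as [Hc|Hc].
    + exists (s :: l). intro i; simpl; rewrite Hl; split.
      * intros [<-|[H1 H2]]; split; auto; lia.
      * intros [H1 H2]. destruct (Nat.eq_dec s i); [left; auto | right; split; auto; lia].
    + exists l. intro i; rewrite Hl; split.
      * intros [H1 H2]; split; auto; lia.
      * intros [H1 H2]. split; auto. destruct (Nat.eq_dec s i); [subst; tauto| lia].
Qed.

Lemma dprime_metric (D : list R) (M : Type) (d : M -> M -> R)
  (Hm : is_metric (fun _ => True) d)
  (A : list M) (s : nat) (t : nat -> M -> R)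
  (Ht : forall i, (i < s)%nat -> katetov D d A (t i))
  (d'' : nat -> nat -> R) (Hd'' : is_metric (fun i => (i < s)%nat) d'')
  (Hdd : forall i j, (i < s)%nat -> (j < s)%nat -> in_dist_set d A (t i) (t j) (d'' i j)) :
  is_metric (in_dom A (fun i => (i < s)%nat)) (dprime d d'' t).
Proof.
  destruct Hm as [Hm1 [Hm2 Hm3]].
  destruct Hd'' as [H1 [H2 H3]].
  assert (K1 : forall i j x, (i < s)%nat -> (j < s)%nat -> In x A ->
            t j x <= t i x + d'' i j /\ d'' i j <= t i x + t j x).
  { intros i j x Hi Hj Hx. destruct (Hdd i j Hi Hj) as [u [v [[_ Hu] [[_ Hv] Huv]]]].
    rewrite <- (Hu x Hx), <- (Hv x Hx), <- Huv.
    pose proof (Hm3 v u x I I I). pose proof (Hm3 u x v I I I).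
    rewrite (Hm2 v u I I) in *. rewrite (Hm2 x v I I) in *. split; lra. }
  assert (K2 : forall i x y, (i < s)%nat -> In x A -> In y A ->
            t i x <= d x y + t i y /\ d x y <= t i x + t i y).
  { intros i x y Hi Hx Hy. destruct (Ht i Hi) as [_ Hk].
    destruct (Hk x y Hx Hy) as [Ha Hb].
    pose proof (Rle_abs (t i x - t i y)). split; lra. }
  split; [|split].
  - intros [x|i] [y|j] Hp Hq; simpl in *.
    + rewrite Hm1 by auto. split; [intros ->; auto | intro H; injection H; auto].
    + destruct (Ht j Hq) as [Hk _]. destruct (Hk x Hp). split; [tauto| discriminate].
    + destruct (Ht i Hp) as [Hk _]. destruct (Hk y Hq). split; [tauto| discriminate].
    + rewrite H1 by auto. split; [intros ->; auto | intro H; injection H; auto].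
  - intros [x|i] [y|j] Hp Hq; simpl in *; auto.
  - intros [x|i] [y|j] [z|k] Hp Hq Hr; simpl in *; auto.
    + destruct (K2 k x y Hr Hp Hq); lra.
    + destruct (K2 j x z Hq Hp Hr); lra.
    + destruct (K1 j k x Hq Hr Hp); lra.
    + destruct (K2 i z y Hp Hr Hq); rewrite (Hm2 z y I I) in *; lra.
    + destruct (K1 i k y Hp Hr Hq); lra.
    + destruct (K1 j i z Hq Hp Hr). rewrite (H2 i j) by auto. lra.
Qed.

Theorem lemma4p2 (D : list R) (HD0 : In 0 D) (HDnn : forall r, In r D -> 0 <= r)
  (Huniv : universal D)
  (M : Type) (d : M -> M -> R) (HM : in_UD D M d)
  (A : list M) (s : nat) (t : nat -> M -> R)
  (Ht : forall i, (i < s)%nat -> katetov D d A (t i))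
  (d'' : nat -> nat -> R) (Hd'' : is_metric (fun i => (i < s)%nat) d'')
  (Hdd : forall i j, (i < s)%nat -> (j < s)%nat -> in_dist_set d A (t i) (t j) (d'' i j)) :
  is_metric (in_dom A (fun i => (i < s)%nat)) (dprime d d'' t) /\
  (forall (C : nat -> Prop), (forall i, C i -> (i < s)%nat) ->
   forall beta : M + nat -> M,
     (forall p q, in_dom A C p -> in_dom A C q ->
        d (beta p) (beta q) = dprime d d'' t p q) ->
     (forall x, In x A -> beta (inl x) = x) ->
     exists alpha : M + nat -> M,
       (forall p q, in_dom A (fun i => (i < s)%nat) p ->
          in_dom A (fun i => (i < s)%nat) q ->
          d (alpha p) (alpha q) = dprime d d'' t p q) /\
       (forall p, in_dom A C p -> alpha p = beta p) /\
       (forall i, (i < s)%nat -> orb d A (t i) (alpha (inr i)))).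
Proof.
  destruct HM as [Hm [_ [Hhom [Hds Hemb]]]].
  pose proof (dprime_metric D M d Hm A s t Ht d'' Hd'' Hdd) as Hdm.
  split; [exact Hdm|].
  intros C HC beta Hbeta HbA.
  set (P := in_dom A (fun i => (i < s)%nat)).
  destruct (nodup_exists A) as [L [HL HLA]].
  set (n := (length L + s)%nat).
  set (enc := fun k => match nth_error L k with Some x => inl x | None => inr (k - length L)%nat end
                : M + nat).
  assert (enc_dom : forall k, (k < n)%nat -> P (enc k)).
  { intros k Hk. unfold enc, P. destruct (nth_error L k) eqn:E; simpl.
    - apply HLA. eapply nth_error_In; eauto.
    - apply nth_error_None in E. unfold n in Hk. lia. }
  assert (enc_inj : forall k k', (k < n)%nat -> (k' < n)%nat -> enc k = enc k' -> k = k').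
  { intros k k' Hk Hk' E. unfold enc in E.
    destruct (nth_error L k) eqn:E1; destruct (nth_error L k') eqn:E2; try discriminate.
    - injection E as ->. rewrite NoDup_nth_error in HL. apply HL.
      + apply nth_error_Some. rewrite E1; discriminate.
      + congruence.
    - apply nth_error_None in E1. apply nth_error_None in E2. injection E as E. lia. }
  assert (enc_surj : forall p, P p -> exists k, (k < n)%nat /\ enc k = p).
  { intros [x|i] Hp; unfold P in Hp; simpl in Hp.
    - apply HLA in Hp. destruct (In_nth_error _ _ Hp) as [k Hk]. exists k. split.
      + assert (k < length L)%nat by (apply nth_error_Some; rewrite Hk; discriminate).
        unfold n; lia.
      + unfold enc; rewrite Hk; auto.
    - exists (length L + i)%nat. split; [unfold n; lia|]. unfold enc.
      rewrite (proj2 (nth_error_None L (length L + i))) by lia. f_equal; lia. }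
  set (e := fun k k' => dprime d d'' t (enc k) (enc k')).
  assert (HDd : forall x y, In (d x y) D) by (intros; apply Hds; eauto).
  destruct (Hemb n e) as [f Hf].
  { destruct Hdm as [Q1 [Q2 Q3]]. split; [|split].
    - intros k k' Hk Hk'. unfold e. rewrite Q1 by (apply enc_dom; auto). split; [apply enc_inj; auto| intros ->; reflexivity].
    - intros; unfold e; apply Q2; apply enc_dom; auto.
    - intros; unfold e; apply Q3; apply enc_dom; auto. }
  { intros k k' Hk Hk'. unfold e. pose proof (enc_dom k Hk) as Pk. pose proof (enc_dom k' Hk') as Pk'.
    destruct (enc k) as [x|i]; destruct (enc k') as [y|j]; unfold P in *; simpl in *.
    - apply HDd.
    - apply (Ht j Pk'); auto.
    - apply (Ht i Pk); auto.
    - destruct (Hdd i j Pk Pk') as [u [v [_ [_ Huv]]]]. rewrite <- Huv. apply HDd. }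
  set (idx := fun p => epsilon (inhabits 0%nat) (fun k => (k < n)%nat /\ enc k = p)).
  assert (Hidx : forall p, P p -> (idx p < n)%nat /\ enc (idx p) = p).
  { intros p Hp. apply (epsilon_spec (inhabits 0%nat) (fun k => (k < n)%nat /\ enc k = p)).
    apply enc_surj; auto. }
  set (E := fun p => f (idx p)).
  assert (HE : forall p q, P p -> P q -> d (E p) (E q) = dprime d d'' t p q).
  { intros p q Hp Hq. unfold E. destruct (Hidx p Hp) as [A1 A2]. destruct (Hidx q Hq) as [B1 B2].
    rewrite Hf by auto. unfold e. rewrite A2, B2. auto. }
  assert (HCP : forall p, in_dom A C p -> P p).
  { intros [x|i] H; unfold P; simpl in *; auto. }
  destruct (list_of_pred_aux C s) as [lC HlC].
  set (Dl := map inl A ++ map inr lC : list (M + nat)).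
  assert (HDl : forall p, In p Dl <-> in_dom A C p).
  { intros [x|i]; unfold Dl; rewrite in_app_iff, !in_map_iff; simpl; split.
    - intros [[y [Hy1 Hy2]]|[y [Hy1 Hy2]]]; [injection Hy1 as ->; auto| discriminate].
    - intro H; left; exists x; auto.
    - intros [[y [Hy1 Hy2]]|[y [Hy1 Hy2]]]; [discriminate| injection Hy1 as ->; apply HlC; auto].
    - intro H; right; exists i; split; auto. apply HlC; split; auto. }
  set (g := fun y => beta (epsilon (inhabits (inr 0%nat : M + nat)) (fun p => In p Dl /\ E p = y))).
  assert (Hg : forall p, In p Dl -> g (E p) = beta p).
  { intros p Hp. unfold g.
    destruct (epsilon_spec (inhabits (inr 0%nat : M + nat)) (fun p' => In p' Dl /\ E p' = E p))
      as [Q1 Q2]; [exists p; auto|].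
    f_equal. set (p' := epsilon _ _) in *.
    apply HDl in Q1. apply HDl in Hp.
    destruct Hdm as [Z1 _]. apply (proj1 (Z1 p' p (HCP _ Q1) (HCP _ Hp))). rewrite <- HE by auto. rewrite Q2.
    destruct Hm as [Y1 _]. apply (proj2 (Y1 (E p) (E p) I I)); reflexivity. }
  destruct (Hhom (map E Dl) g) as [h [Hh1 [_ Hh3]]].
  { intros x y Hx Hy. apply in_map_iff in Hx as [p [<- Hp]]. apply in_map_iff in Hy as [q [<- Hq]].
    rewrite !Hg by auto. apply HDl in Hp. apply HDl in Hq.
    rewrite Hbeta by auto. rewrite HE by auto. auto. }
  exists (fun p => h (E p)). split; [|split].
  - intros p q Hp Hq. rewrite Hh1. apply HE; auto.
  - intros p Hp. rewrite Hh3. apply Hg. apply HDl; auto. apply in_map. apply HDl; auto.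
  - assert (Halpha : forall x, In x A -> h (E (inl x)) = x).
    { intros x Hx. rewrite Hh3. rewrite Hg. apply HbA; auto.
      apply HDl; auto. apply in_map; apply HDl; auto. }
    intros i Hi. split.
    + intro Hin. destruct (Ht i Hi) as [Hk _]. destruct (Hk _ Hin) as [_ Hne]. apply Hne.
      set (y := h (E (inr i))) in *.
      assert (d y y = 0) by (destruct Hm as [Y1 _]; apply Y1; auto).
      assert (H2 : d y (h (E (inl y))) = t i y).
      { unfold y. rewrite Hh1, HE; unfold P; simpl; auto. }
      rewrite (Halpha y Hin) in H2. lra.
    + intros x Hx. assert (H2 : d (h (E (inr i))) (h (E (inl x))) = t i x).
      { rewrite Hh1, HE; unfold P; simpl; auto. }
      rewrite (Halpha x Hx) in H2. exact H2.
Qed.
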